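(* Let $\lambda_1,\lambda_2,\sigma_1,\sigma_2\in\mathbb{C}^*$ and $\eta_1,\eta_2\in\mathbb{C}$. Then $\Omega(\lambda_1,\eta_1,\sigma_1,0)\otimes\Omega(\lambda_2,\eta_2,0,\sigma_2)$ is an irreducible $\mathcal{G}$-module if and only if $\lambda_1\neq\lambda_2$.
   Context: The planar Galilean conformal algebra $\mathcal{G}$ is the complex Lie algebra with basis $\{L_m,H_m,I_m,J_m\mid m\in\mathbb{Z}\}$ and brackets $[L_m,L_n]=(n-m)L_{m+n}$, $[L_m,H_n]=nH_{m+n}$, $[L_m,I_n]=(n-m)I_{m+n}$, $[L_m,J_n]=(n-m)J_{m+n}$, $[H_m,I_n]=I_{m+n}$, $[H_m,J_n]=-J_{m+n}$, and $[H_m,H_n]=[I_m,I_n]=[J_m,J_n]=[I_m,J_n]=0$ for all $m,n\in\mathbb{Z}$. For $\lambda,\sigma\in\mathbb{C}^*$, $\eta\in\mathbb{C}$, the module $\Omega(\lambda,\eta,\sigma,0)$ is $\mathbb{C}[X,Y]$ with $L_m f(X,Y)=\lambda^m(Y-mX+m\eta)f(X,Y-m)$, $H_m f(X,Y)=\lambda^m X f(X,Y-m)$, $I_m f(X,Y)=\lambda^m\sigma f(X-1,Y-m)$, $J_m f(X,Y)=0$. The module $\Omega(\lambda,\eta,0,\sigma)$ is $\mathbb{C}[S,T]$ with $L_m f(S,T)=\lambda^m(T+mS+m\eta)f(S,T-m)$, $H_m f(S,T)=\lambda^m S f(S,T-m)$, $I_m f(S,T)=0$, $J_m f(S,T)=\lambda^m\sigma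 f(S+1,T-m)$. The tensor product of $\mathcal{G}$-modules has action $x(v\otimes w)=xv\otimes w+v\otimes xw$. *)

(* Defs.v *)
From HB Require Import structures.
From mathcomp Require Import all_boot all_algebra.
From mathcomp Require Import reals complex mpoly.
Set Implicit Arguments. Unset Strict Implicit. Unset Printing Implicit Defensive.
Import GRing.Theory Num.Theory.
Local Open Scope ring_scope.

Section GCA.
Variable R : realType.
Local Notation C := R[i].

(* Abstract notion: a G-module structure on a C-vector space V is given by
   the four families of operators L_m, H_m, I_m, J_m (m : int).       *)
Definition gca_submodule (V : lmodType C) (L H I J : int -> V -> V)
    (P : V -> Prop) : Prop :=
  [/\ P 0,
      (forall (a : C) (u v : V), P u -> P v -> P (a *: u + v)),
      (forall m u, P u -> P (L m u)),
      (forall m u, P u -> P (H m u)) &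
      (forall m u, P u -> P (I m u)) /\ (forall m u, P u -> P (J m u))].

Definition gca_irreducible (V : lmodType C) (L H I J : int -> V -> V) : Prop :=
  (exists v : V, v != 0) /\
  forall P : V -> Prop, gca_submodule L H I J P ->
    (forall v, P v -> v = 0) \/ (forall v, P v).

(* The tensor product  Omega(l1,e1,s1,0) (x) Omega(l2,e2,0,s2)
   = C[X,Y] (x) C[S,T], realised as C[X,Y,S,T] = {mpoly C[4]} via
   f(X,Y) (x) g(S,T) |-> f g, with variables
   'X_0 = X, 'X_1 = Y, 'X_2 = S, 'X_3 = T.
   Each factor's operator acts on its own variables (the other variables
   being treated as scalars), and x(v (x) w) = xv (x) w + v (x) xw.        *)
Local Notation P4 := {mpoly C[4]}.

Definition cst (c : C) : P4 := c%:MP.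
Definition zi (m : int) : C := m%:~R.

Definition shift4 (a b c d : C) (F : P4) : P4 :=
  comp_mpoly [tuple 'X_0 + cst a; 'X_1 + cst b; 'X_2 + cst c; 'X_3 + cst d] F.

(* action of Omega(l1, e1, s1, 0) on the X,Y variables *)
Definition L1 (l1 e1 : C) (m : int) (F : P4) : P4 :=
  cst (l1 ^ m) * ('X_1 - cst (zi m) * 'X_0 + cst (zi m * e1))
    * shift4 0 (- zi m) 0 0 F.
Definition H1 (l1 : C) (m : int) (F : P4) : P4 :=
  cst (l1 ^ m) * 'X_0 * shift4 0 (- zi m) 0 0 F.
Definition I1 (l1 s1 : C) (m : int) (F : P4) : P4 :=
  cst (l1 ^ m * s1) * shift4 (-1) (- zi m) 0 0 F.
Definition J1 (m : int) (F : P4) : P4 := 0.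

(* action of Omega(l2, e2, 0, s2) on the S,T variables *)
Definition L2 (l2 e2 : C) (m : int) (F : P4) : P4 :=
  cst (l2 ^ m) * ('X_3 + cst (zi m) * 'X_2 + cst (zi m * e2))
    * shift4 0 0 0 (- zi m) F.
Definition H2 (l2 : C) (m : int) (F : P4) : P4 :=
  cst (l2 ^ m) * 'X_2 * shift4 0 0 0 (- zi m) F.
Definition I2 (m : int) (F : P4) : P4 := 0.
Definition J2 (l2 s2 : C) (m : int) (F : P4) : P4 :=
  cst (l2 ^ m * s2) * shift4 0 0 1 (- zi m) F.

Definition tL (l1 e1 l2 e2 : C) m F := L1 l1 e1 m F + L2 l2 e2 m F.
Definition tH (l1 l2 : C) m F := H1 l1 m F + H2 l2 m F.
Definition tI (l1 s1 : C) m F := I1 l1 s1 m F + I2 m F.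
Definition tJ (l2 s2 : C) m F := J1 m F + J2 l2 s2 m F.

Definition tensor_irreducible (l1 e1 s1 l2 e2 s2 : C) : Prop :=
  gca_irreducible (V := P4) (tL l1 e1 l2 e2) (tH l1 l2) (tI l1 s1) (tJ l2 s2).

End GCA.

(* Main.v *)
Require Import Defs.
From HB Require Import structures.
From mathcomp Require Import all_boot all_algebra.
From mathcomp Require Import reals complex mpoly.
From mathcomp Require Import ring lra zify.
From Stdlib Require Import Classical_Prop.
Import GRing.Theory Num.Theory.
Local Open Scope ring_scope.
Set Implicit Arguments. Unset Strict Implicit. Unset Printing Implicit Defensive.

Section S.
Variable R : realType.
Local Notation C := R[i].
Local Notation P4 := {mpoly C[4]}.
Local Notation zm m := (zi R m).

Definition pt (x y s t : C) : 'I_4 -> C := fun i => nth 0 [:: x; y; s; t] i.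

Lemma sh_eval (a b c d x y s t : C) (F : P4) :
  (shift4 a b c d F).@[pt x y s t] = F.@[pt (x+a) (y+b) (s+c) (t+d)].
Proof.
rewrite /shift4 comp_mpoly_meval; apply: meval_eq => i.
case: i => [[|[|[|[|?]]]] Hi] //=; rewrite (tnth_nth 0) /= mevalD mevalXU /cst mevalC //.
Qed.

Lemma X0e x y s t : ('X_0 : P4).@[pt x y s t] = x. Proof. by rewrite mevalXU. Qed.
Lemma X1e x y s t : ('X_1 : P4).@[pt x y s t] = y. Proof. by rewrite mevalXU. Qed.
Lemma X2e x y s t : ('X_2 : P4).@[pt x y s t] = s. Proof. by rewrite mevalXU. Qed.
Lemma X3e x y s t : ('X_3 : P4).@[pt x y s t] = t. Proof. by rewrite mevalXU. Qed.
Lemma cste c v : (cst c : P4).@[v] = c. Proof. by rewrite /cst mevalC. Qed.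

Definition Nsub (F : P4) := forall x y s t, F.@[pt x y s t] = F.@[pt x (y + t) s 0].
Lemma L1e l e m u x y s t : (L1 l e m u).@[pt x y s t] =
  l ^ m * (y - zm m * x + zm m * e) * u.@[pt x (y - zm m) s t].
Proof.
rewrite /L1 mevalM sh_eval mevalM cste.
by rewrite mevalD mevalB mevalM !cste X0e X1e !addr0.
Qed.
Lemma L2e l e m u x y s t : (L2 l e m u).@[pt x y s t] =
  l ^ m * (t + zm m * s + zm m * e) * u.@[pt x y s (t - zm m)].
Proof.
rewrite /L2 mevalM sh_eval mevalM cste.
by rewrite mevalD mevalD mevalM !cste X2e X3e !addr0.
Qed.
Lemma H1e l m u x y s t : (H1 l m u).@[pt x y s t] =
  l ^ m * x * u.@[pt x (y - zm m) s t].
Proof. by rewrite /H1 mevalM sh_eval mevalM cste X0e !addr0. Qed.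
Lemma H2e l m u x y s t : (H2 l m u).@[pt x y s t] =
  l ^ m * s * u.@[pt x y s (t - zm m)].
Proof. by rewrite /H2 mevalM sh_eval mevalM cste X2e !addr0. Qed.
Lemma I1e l s1 m u x y s t : (I1 l s1 m u).@[pt x y s t] =
  l ^ m * s1 * u.@[pt (x - 1) (y - zm m) s t].
Proof. by rewrite /I1 mevalM sh_eval cste !addr0. Qed.
Lemma J2e l s2 m u x y s t : (J2 l s2 m u).@[pt x y s t] =
  l ^ m * s2 * u.@[pt x y (s + 1) (t - zm m)].
Proof. by rewrite /J2 mevalM sh_eval cste !addr0. Qed.

Lemma reducible (l e1 s1 e2 s2 : C) : ~ tensor_irreducible l e1 s1 l e2 s2.
Proof.
move=> [_ /(_ Nsub)] H.
have sub : gca_submodule (tL l e1 l e2) (tH l l) (tI l s1) (tJ l s2) Nsub.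
  split.
  - by move=> x y s t; rewrite meval0 meval0.
  - move=> a u v Hu Hv x y s t.
    apply: (etrans (mevalD _ _ _)); apply: esym; apply: (etrans (mevalD _ _ _)).
    apply: esym; apply: (etrans (f_equal2 +%R (mevalZ _ _ _) (erefl _))).
    apply: esym; apply: (etrans (f_equal2 +%R (mevalZ _ _ _) (erefl _))).
    by rewrite (Hu x y s t) (Hv x y s t).
  - move=> m u Hu x y s t; rewrite /tL mevalD (mevalD (pt x (y + t) s 0)).
    apply: (etrans (f_equal2 +%R (L1e l e1 m u x y s t) (L2e l e2 m u x y s t))).
    apply: esym; apply: (etrans (f_equal2 +%R (L1e l e1 m u x (y + t) s 0) (L2e l e2 m u x (y+t) s 0))).
    rewrite (Hu x (y - zm m) s t) (Hu x y s (t - zm m)) (Hu x (y + t) s (0 - zm m)).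
    have -> : y - zm m + t = y + t - zm m by ring.
    have -> : y + (t - zm m) = y + t - zm m by ring.
    have -> : y + t + (0 - zm m) = y + t - zm m by ring.
    ring.
  - move=> m u Hu x y s t; rewrite /tH mevalD (mevalD (pt x (y + t) s 0)).
    apply: (etrans (f_equal2 +%R (H1e l m u x y s t) (H2e l m u x y s t))).
    apply: esym; apply: (etrans (f_equal2 +%R (H1e l m u x (y + t) s 0) (H2e l m u x (y+t) s 0))).
    rewrite (Hu x (y - zm m) s t) (Hu x y s (t - zm m)) (Hu x (y + t) s (0 - zm m)).
    have -> : y - zm m + t = y + t - zm m by ring.
    have -> : y + (t - zm m) = y + t - zm m by ring.
    have -> : y + t + (0 - zm m) = y + t - zm m by ring.
    ring.
  split.
  - move=> m u Hu x y s t; rewrite /tI /I2 addr0.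
    apply: (etrans (I1e l s1 m u x y s t)).
    apply: esym; apply: (etrans (I1e l s1 m u x (y + t) s 0)).
    rewrite (Hu (x - 1) (y - zm m) s t).
    have -> : y - zm m + t = y + t - zm m by ring.
    by rewrite (Hu (x - 1) (y + t - zm m) s 0) addr0.
  - move=> m u Hu x y s t; rewrite /tJ /J1 add0r.
    apply: (etrans (J2e l s2 m u x y s t)).
    apply: esym; apply: (etrans (J2e l s2 m u x (y + t) s 0)).
    rewrite (Hu x y (s + 1) (t - zm m)) (Hu x (y + t) (s + 1) (0 - zm m)).
    have -> : y + (t - zm m) = y + t - zm m by ring.
    have -> : y + t + (0 - zm m) = y + t - zm m by ring.
    by [].
case: (H sub) => [H0|H1].
- have : (1 : P4) = 0 by apply: H0 => x y s t; rewrite meval1 meval1.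
  by move/eqP; rewrite oner_eq0.
- have := H1 'X_1 0 0 0 1; rewrite X1e X1e add0r => /eqP; rewrite eq_sym oner_eq0 //.
Qed.
Lemma msizeMle (p q : P4) (a b : nat) : (msize p <= a -> msize q <= b -> msize (p * q) <= a + b - 1)%N.
Proof.
move=> hp hq.
have [->|p0] := eqVneq p 0; first by rewrite mul0r msize0.
have [->|q0] := eqVneq q 0; first by rewrite mulr0 msize0.
rewrite msizeM // -subn1.
have : (0 < msize p)%N by rewrite lt0n msize_poly_eq0.
have : (0 < msize q)%N by rewrite lt0n msize_poly_eq0.
move: hp hq; set x := msize p; set y := msize q; lia.
Qed.

Lemma msizeDle (p q : P4) (a : nat) : (msize p <= a -> msize q <= a -> msize (p + q) <= a)%N.
Proof. by move=> hp hq; apply: leq_trans (msizeD_le _ _) _; rewrite geq_max hp hq. Qed.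

Lemma msizeBle (p q : P4) (a : nat) : (msize p <= a -> msize q <= a -> msize (p - q) <= a)%N.
Proof. by move=> hp hq; apply: msizeDle => //; rewrite msizeN. Qed.

Lemma msizeZle (p : P4) c (a : nat) : (msize p <= a -> msize (c *: p) <= a)%N.
Proof. by move=> hp; apply: leq_trans (msizeZ_le _ _) _. Qed.

Lemma msizecst c : (msize (cst c : P4) <= 1)%N.
Proof. by rewrite /cst msizeC; case: (c != 0). Qed.

Lemma msizeXi (i : 'I_4) : msize ('X_i : P4) = 2%N.
Proof. by rewrite msizeX mdeg1. Qed.

Lemma shD a b c d (F G : P4) : shift4 a b c d (F + G) = shift4 a b c d F + shift4 a b c d G.
Proof. by rewrite /shift4 raddfD. Qed.
Lemma shZ a b c d e (F : P4) : shift4 a b c d (e *: F) = e *: shift4 a b c d F.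
Proof. by rewrite /shift4 comp_mpolyZ. Qed.
Lemma shM a b c d (F G : P4) : shift4 a b c d (F * G) = shift4 a b c d F * shift4 a b c d G.
Proof. by rewrite /shift4 rmorphM. Qed.
Lemma sh1 a b c d : shift4 a b c d (1 : P4) = 1.
Proof. by rewrite /shift4 rmorph1. Qed.
Definition dv (a b c d : C) (F : P4) :=
  a *: mderiv 0 F + b *: mderiv 1 F + c *: mderiv 2 F + d *: mderiv 3 F.

Definition Good a b c d (k : nat) (F : P4) :=
  [/\ (msize F <= k)%N, (msize (shift4 a b c d F - F) <= k - 1)%N &
      (msize (shift4 a b c d F - F - dv a b c d F) <= k - 2)%N].

Lemma h01 : ((0:'I_4) == 1) = false. Proof. by []. Qed.
Lemma h23 : ((2:'I_4) == 3) = false. Proof. by []. Qed.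

Lemma submm' (m : 'X_{1..4}) : (m - m)%MM = 0%MM.
Proof. by apply/mnmP => i; rewrite mnmBE subnn mnm0E. Qed.

Lemma dvM a b c d (F G : P4) : dv a b c d (F * G) = dv a b c d F * G + F * dv a b c d G.
Proof.
rewrite /dv !mderivM -!mul_mpolyC.
move: (mderiv 0 F) (mderiv 1 F) (mderiv 2 F) (mderiv 3 F) => p0 p1 p2 p3.
move: (mderiv 0 G) (mderiv 1 G) (mderiv 2 G) (mderiv 3 G) => q0 q1 q2 q3.
ring.
Qed.
Lemma dvD a b c d (F G : P4) : dv a b c d (F + G) = dv a b c d F + dv a b c d G.
Proof.
rewrite /dv !mderivD -!mul_mpolyC.
move: (mderiv 0 F) (mderiv 1 F) (mderiv 2 F) (mderiv 3 F) => p0 p1 p2 p3.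
move: (mderiv 0 G) (mderiv 1 G) (mderiv 2 G) (mderiv 3 G) => q0 q1 q2 q3.
ring.
Qed.
Lemma dvZ a b c d e (F : P4) : dv a b c d (e *: F) = e *: dv a b c d F.
Proof.
rewrite /dv !mderivZ -!mul_mpolyC.
move: (mderiv 0 F) (mderiv 1 F) (mderiv 2 F) (mderiv 3 F) => p0 p1 p2 p3.
ring.
Qed.

Section GoodS.
Variables a b c d : C.
Local Notation Sh := (shift4 a b c d).
Local Notation dd := (dv a b c d).
Local Notation Gd := (Good a b c d).

Lemma Good_mono k l F : Gd k F -> (k <= l)%N -> Gd l F.
Proof.
move=> [h1 h2 h3] kl; split.
- exact: leq_trans h1 kl.
- apply: leq_trans h2 _; lia.
- apply: leq_trans h3 _; lia.
Qed.

Lemma Good_add k F G : Gd k F -> Gd k G -> Gd k (F + G).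
Proof.
move=> [f1 f2 f3] [g1 g2 g3]; split.
- exact: msizeDle f1 g1.
- rewrite shD.
  have -> : Sh F + Sh G - (F + G) = (Sh F - F) + (Sh G - G).
    move: (Sh F) (Sh G) => A B; ring.
  exact: msizeDle f2 g2.
- rewrite shD dvD.
  have -> : Sh F + Sh G - (F + G) - (dd F + dd G) = (Sh F - F - dd F) + (Sh G - G - dd G).
    move: (Sh F) (Sh G) (dd F) (dd G) => A B A' B'; ring.
  exact: msizeDle f3 g3.
Qed.

Lemma Good_scale k e F : Gd k F -> Gd k (e *: F).
Proof.
move=> [f1 f2 f3]; split.
- exact: msizeZle.
- rewrite shZ -scalerBr; exact: msizeZle.
- rewrite shZ dvZ -scalerBr -scalerBr; exact: msizeZle.
Qed.

Lemma Good0 k : Gd k 0.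
Proof.
by rewrite /Good /shift4 raddf0 /dv !mderiv0 !scaler0 !addr0 !subr0 msize0.
Qed.

End GoodS.
Lemma Good1 a b c d : Good a b c d 1 1.
Proof.
rewrite /Good sh1 subrr /dv -mpolyX0 !mderivX !mnm0E !scale0r !scaler0 !addr0 subr0 msize0 mpolyX0 msize1.
by [].
Qed.

Lemma GoodX a b c d (i : 'I_4) : Good a b c d 2 'X_i.
Proof.
rewrite /Good msizeXi /dv !mderivX !mnm1E.
have hs : shift4 a b c d 'X_i - 'X_i = cst (nth 0 [:: a; b; c; d] i).
  rewrite /shift4 comp_mpolyXU.
  case: i => [[|[|[|[|?]]]] Hi] //=; rewrite addrC addKr //.
rewrite hs; split => //; first exact: msizecst.
suff -> : cst (nth 0 [:: a; b; c; d] i) -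
   (a *: ((i == 0 : nat)%:R *: 'X_[U_(i) - U_(0)]) + b *: ((i == 1 : nat)%:R *: 'X_[U_(i) - U_(1)]) +
    c *: ((i == 2 : nat)%:R *: 'X_[U_(i) - U_(2)]) + d *: ((i == 3 : nat)%:R *: 'X_[U_(i) - U_(3)])) = 0.
  by rewrite msize0.
rewrite /cst; clear hs.
case: i => [[|[|[|[|?]]]] Hi] //=.
- have -> : Ordinal Hi = (0 : 'I_4) by apply: val_inj.
  by rewrite !scale0r !scaler0 !addr0 scale1r submm' mpolyX0 -mul_mpolyC mulr1 subrr.
- have -> : Ordinal Hi = (1 : 'I_4) by apply: val_inj.
  by rewrite !scale0r !scaler0 !addr0 add0r scale1r submm' mpolyX0 -mul_mpolyC mulr1 subrr.
- have -> : Ordinal Hi = (2 : 'I_4) by apply: val_inj.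
  by rewrite !scale0r !scaler0 !addr0 add0r scale1r submm' mpolyX0 -mul_mpolyC mulr1 subrr.
- have -> : Ordinal Hi = (3 : 'I_4) by apply: val_inj.
  by rewrite !scale0r !scaler0 !addr0 add0r scale1r submm' mpolyX0 -mul_mpolyC mulr1 subrr.
Qed.
Lemma msize_le0 (p : P4) : (msize p <= 0)%N -> p = 0.
Proof. by rewrite leqn0 msize_poly_eq0 => /eqP. Qed.

Lemma Good_mul' (a b c d : C) k l (F G : P4) : (2 <= k)%N -> (1 <= l)%N ->
  Good a b c d k F -> Good a b c d l G -> Good a b c d (k + l - 1) (F * G).
Proof.
move=> k2 l1 [f1 f2 f3] [g1 g2 g3]; split.
- exact: msizeMle.
- rewrite shM.
  have -> : shift4 a b c d F * shift4 a b c d G - F * G =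
   (shift4 a b c d F - F) * G + F * (shift4 a b c d G - G) + (shift4 a b c d F - F) * (shift4 a b c d G - G).
    move: (shift4 a b c d F) (shift4 a b c d G) => A B; ring.
  have e1 := msizeMle f2 g1. have e2 := msizeMle f1 g2. have e3 := msizeMle f2 g2.
  apply: msizeDle; [apply: msizeDle|]; [apply: leq_trans e1 _|apply: leq_trans e2 _|apply: leq_trans e3 _]; lia.
- rewrite shM dvM.
  have -> : shift4 a b c d F * shift4 a b c d G - F * G - (dv a b c d F * G + F * dv a b c d G) =
     (shift4 a b c d F - F - dv a b c d F) * G + F * (shift4 a b c d G - G - dv a b c d G)
      + (shift4 a b c d F - F) * (shift4 a b c d G - G).
    move: (shift4 a b c d F) (shift4 a b c d G) (dv a b c d F) (dv a b c d G) => A B A' B'; ring.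
  have e1 := msizeMle f3 g1. have e3 := msizeMle f2 g2.
  have e2 : (msize (F * (shift4 a b c d G - G - dv a b c d G)) <= k + l - 1 - 2)%N.
    case: l l1 g1 g2 g3 {e1 e3} => [//|[|l]] _ g1 g2 g3.
    + by move: g3 => /msize_le0 ->; rewrite mulr0 msize0.
    + apply: leq_trans (msizeMle f1 g3) _; lia.
  apply: msizeDle; [apply: msizeDle|]; [apply: leq_trans e1 _|exact e2|apply: leq_trans e3 _]; lia.
Qed.

Lemma Good_pow (a b c d : C) (i : 'I_4) e : Good a b c d e.+1 ('X_i ^+ e).
Proof.
elim: e => [|[|e] IH]; first by rewrite expr0; apply: Good1.
- by rewrite expr1; apply: GoodX.
- rewrite exprS.
  have := Good_mul' (k := 2) (l := e.+2) (leqnn 2) (isT : (1 <= e.+2)%N) (GoodX a b c d i) IH.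
  by have -> : (2 + e.+2 - 1 = e.+3)%N by lia.
Qed.

Lemma Good_prod (a b c d : C) (r : seq 'I_4) (m : 'I_4 -> nat) :
  Good a b c d (\sum_(i <- r) m i).+1 (\prod_(i <- r) 'X_i ^+ m i).
Proof.
elim: r => [|i r IH]; first by rewrite !big_nil; apply: Good1.
rewrite !big_cons.
case E: (m i) => [|e].
  by rewrite expr0 mul1r add0n.
have := Good_mul' (k := e.+2) (l := (\sum_(j <- r) m j).+1) (isT : (2 <= e.+2)%N) (isT : (1 <= _.+1)%N)
  (Good_pow a b c d i e.+1) IH.
by have -> : (e.+2 + (\sum_(j <- r) m j).+1 - 1 = (e.+1 + \sum_(j <- r) m j).+1)%N by lia.
Qed.

Lemma Good_mon (a b c d : C) (m : 'X_{1..4}) : Good a b c d (mdeg m).+1 'X_[m].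
Proof. by rewrite mpolyXE_id mdegE; apply: Good_prod. Qed.

Lemma Good_all (a b c d : C) (F : P4) : Good a b c d (msize F) F.
Proof.
rewrite [X in Good _ _ _ _ _ X]mpolyE.
have : forall m, m \in msupp F -> (mdeg m < msize F)%N by move=> m; apply: msize_mdeg_lt.
elim: (msupp F) => [|m r IH] H; first by rewrite big_nil; apply: Good0.
rewrite big_cons; apply: Good_add.
  apply: Good_scale; apply: Good_mono (Good_mon a b c d m) _; by apply: H; rewrite inE eqxx.
apply: IH => m' hm'; apply: H; rewrite inE hm' orbT //.
Qed.
Lemma zi0 : zm 0 = 0. Proof. by rewrite /zi. Qed.
Lemma zi1 : zm 1 = 1. Proof. by rewrite /zi. Qed.

Section Irr.
Variables (l1 l2 s1 s2 e1 e2 : C).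
Hypotheses (l10 : l1 != 0) (l20 : l2 != 0) (s10 : s1 != 0) (s20 : s2 != 0) (l12 : l1 != l2).
Variable P : P4 -> Prop.
Hypothesis sub : gca_submodule (tL l1 e1 l2 e2) (tH l1 l2) (tI l1 s1) (tJ l2 s2) P.

Lemma P0 : P 0. Proof. by case: sub. Qed.
Lemma Plin a u v : P u -> P v -> P (a *: u + v). Proof. by case: sub => _ h _ _ _; apply: h. Qed.
Lemma PZ a u : P u -> P (a *: u).
Proof. by move=> hu; have := Plin a hu P0; rewrite addr0. Qed.
Lemma PD u v : P u -> P v -> P (u + v).
Proof. by move=> hu hv; have := Plin 1 hu hv; rewrite scale1r. Qed.
Lemma PB u v : P u -> P v -> P (u - v).
Proof. by move=> hu hv; have := Plin (-1) hv hu; rewrite scaleN1r addrC. Qed.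
Lemma PC c u : P u -> P (cst c * u).
Proof. by rewrite /cst mul_mpolyC; apply: PZ. Qed.
Lemma Pinv k u : k != 0 -> P (cst k * u) -> P u.
Proof.
move=> k0 /(PC k^-1); rewrite /cst mulrA -rmorphM mulVf // rmorph1 mul1r //.
Qed.

Lemma PI m u : P u -> P (shift4 (-1) (- zm m) 0 0 u).
Proof.
move=> hu; case: sub => _ _ _ _ [hI _]; have := hI m u hu.
rewrite /tI /I1 /I2 addr0; apply: Pinv.
by rewrite mulf_neq0 // expfz_neq0.
Qed.
Lemma PJ m u : P u -> P (shift4 0 0 1 (- zm m) u).
Proof.
move=> hu; case: sub => _ _ _ _ [_ hJ]; have := hJ m u hu.
rewrite /tJ /J1 /J2 add0r; apply: Pinv.
by rewrite mulf_neq0 // expfz_neq0.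
Qed.
Lemma PH m u : P u -> P (cst (l1 ^ m) * 'X_0 * shift4 0 (- zm m) 0 0 u +
   cst (l2 ^ m) * 'X_2 * shift4 0 0 0 (- zm m) u).
Proof. by move=> hu; case: sub => _ _ _ hH _; apply: hH. Qed.
Lemma PL m u : P u -> P (cst (l1 ^ m) * ('X_1 - cst (zm m) * 'X_0 + cst (zm m * e1)) * shift4 0 (- zm m) 0 0 u +
   cst (l2 ^ m) * ('X_3 + cst (zm m) * 'X_2 + cst (zm m * e2)) * shift4 0 0 0 (- zm m) u).
Proof. by move=> hu; case: sub => _ _ hL _ _; apply: hL. Qed.

Lemma solve2 (u w : P4) : P (cst (l1 ^ 0) * u + cst (l2 ^ 0) * w) ->
  P (cst (l1 ^ 1) * u + cst (l2 ^ 1) * w) -> P u /\ P w.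
Proof.
move=> h0 h1.
have d0 : l1 - l2 != 0 by rewrite subr_eq0.
split.
- have := PB (PZ ((l1 - l2)^-1) h1) (PZ (l2 / (l1 - l2)) h0).
  suff -> : (l1 - l2)^-1 *: (cst (l1 ^ 1) * u + cst (l2 ^ 1) * w) -
     (l2 / (l1 - l2)) *: (cst (l1 ^ 0) * u + cst (l2 ^ 0) * w) = u by [].
  apply/mpolyP => mm; rewrite /cst !(mcoeffB, mcoeffZ, mcoeffD, mcoeffCM) expr0z expr1z.
  by field.
- have := PB (PZ (l1 / (l1 - l2)) h0) (PZ ((l1 - l2)^-1) h1).
  suff -> : (l1 / (l1 - l2)) *: (cst (l1 ^ 0) * u + cst (l2 ^ 0) * w) -
     (l1 - l2)^-1 *: (cst (l1 ^ 1) * u + cst (l2 ^ 1) * w) = w by [].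
  apply/mpolyP => mm; rewrite /cst !(mcoeffB, mcoeffZ, mcoeffD, mcoeffCM) expr0z expr1z.
  by field.
Qed.
Lemma exists_pos (m : 'X_{1..4}) : (0 < mdeg m)%N -> exists i : 'I_4, (0 < m i)%N.
Proof.
move=> hm; case: (boolP [exists i, (0 < m i)%N]) => [/existsP [i hi]|]; first by exists i.
rewrite negb_exists => /forallP H.
have : m = 0%MM by apply/mnmP => i; rewrite mnm0E; move: (H i); rewrite lt0n negbK => /eqP.
by move=> E; move: hm; rewrite E mdeg0.
Qed.

Lemma UleP (m : 'X_{1..4}) i : (0 < m i)%N -> (U_(i) <= m)%MM.
Proof.
move=> hi; apply/mnm_lepP => j; rewrite mnm1E.
by case: (eqVneq i j) => [<-|] //=.
Qed.

Lemma Lnz (F G : P4) (k : nat) (i : 'I_4) (eps : C) : eps != 0 ->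
  msize F = k.+2 -> (0 < mlead F i)%N ->
  (msize (G - eps *: mderiv i F) <= k)%N -> G != 0.
Proof.
move=> e0 hF hi hG.
have F0 : F != 0 by rewrite -msize_poly_eq0 hF.
set mm := (mlead F - U_(i))%MM.
have hK : (mm + U_(i) = mlead F)%MM by rewrite submK //; apply: UleP.
have dm : mdeg mm = k.
  have := mlead_deg F0; rewrite hF -hK mdegD mdeg1 => /eqP; rewrite eqSS => /eqP; lia.
have c0 : (G - eps *: mderiv i F)@_mm = 0.
  by apply: memN_msupp_eq0; apply: msize_mdeg_ge; rewrite dm.
apply/eqP => G0; move: c0; rewrite G0 sub0r mcoeffN mcoeffZ mcoeff_mderiv hK => /eqP.
rewrite oppr_eq0 mulf_eq0 (negbTE e0) /= mulrn_eq0 /= mleadc_eq0 (negbTE F0).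
by [].
Qed.
Lemma ord4 (i : 'I_4) : [\/ i = 0, i = 1, i = 2 | i = 3].
Proof.
case: i => [[|[|[|[|?]]]] Hi] //.
- by apply: Or41; apply: val_inj.
- by apply: Or42; apply: val_inj.
- by apply: Or43; apply: val_inj.
- by apply: Or44; apply: val_inj.
Qed.

Lemma stepA n : forall F, (msize F <= n)%N -> P F -> F != 0 -> P 1.
Proof.
elim: n => [|n IH] F hn hP F0.
  by move: F0; rewrite (msize_le0 hn) eqxx.
case: (leqP (msize F) 1) => h1.
  have E := msize1_polyC h1.
  have c0 : F@_0 != 0.
    apply: contra F0 => /eqP c0; apply/eqP; rewrite E c0 //.
  have := PZ (F@_0)^-1 hP; rewrite {2}E -mul_mpolyC -rmorphM mulVf // rmorph1 mulr1 //.
set k := (msize F - 2)%N.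
have hF : msize F = k.+2 by rewrite /k; lia.
have hk : (k.+1 <= n)%N by lia.
have [i hi] : exists i : 'I_4, (0 < mlead F i)%N.
  by apply: exists_pos; have := mlead_deg F0; rewrite hF => -[->].
have IHk : forall G, (msize G <= k.+1)%N -> P G -> G != 0 -> P 1.
  by move=> G hG; apply: IH; apply: leq_trans hG hk.
have hPI0 : P (shift4 (-1) 0 0 0 F) by have := PI 0 hP; rewrite zi0 oppr0.
have hPI1 : P (shift4 (-1) (-1) 0 0 F) by have := PI 1 hP; rewrite zi1.
have hPJ0 : P (shift4 0 0 1 0 F) by have := PJ 0 hP; rewrite zi0 oppr0.
have hPJ1 : P (shift4 0 0 1 (-1) F) by have := PJ 1 hP; rewrite zi1.
case: (ord4 i) => Ei; rewrite {}Ei in hi.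
- have [_ g2 g3] := Good_all (-1) 0 0 0 F.
  apply: (IHk (shift4 (-1) 0 0 0 F - F)); first by move: g2; rewrite hF !subSS !subn0.
    exact: PB hPI0 hP.
  apply: (Lnz (i := 0) (eps := -1) _ hF hi) => //; first by rewrite oppr_eq0 oner_eq0.
  have -> : shift4 (-1) 0 0 0 F - F - (-1) *: mderiv 0 F =
    shift4 (-1) 0 0 0 F - F - dv (-1) 0 0 0 F by rewrite /dv !scale0r !addr0.
  by move: g3; rewrite hF !subSS !subn0.
- have [_ a2 a3] := Good_all (-1) (-1) 0 0 F.
  have [_ b2 b3] := Good_all (-1) 0 0 0 F.
  rewrite hF !subSS !subn0 in a2 a3 b2 b3.
  apply: (IHk (shift4 (-1) (-1) 0 0 F - shift4 (-1) 0 0 0 F)).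
  + have -> : shift4 (-1) (-1) 0 0 F - shift4 (-1) 0 0 0 F =
       (shift4 (-1) (-1) 0 0 F - F) - (shift4 (-1) 0 0 0 F - F).
      by move: (shift4 (-1) (-1) 0 0 F) (shift4 (-1) 0 0 0 F) => A B; ring.
    exact: msizeBle a2 b2.
  + exact: PB hPI1 hPI0.
  apply: (Lnz (i := 1) (eps := -1) _ hF hi) => //; first by rewrite oppr_eq0 oner_eq0.
  have -> : shift4 (-1) (-1) 0 0 F - shift4 (-1) 0 0 0 F - (-1) *: mderiv 1 F =
    (shift4 (-1) (-1) 0 0 F - F - dv (-1) (-1) 0 0 F) - (shift4 (-1) 0 0 0 F - F - dv (-1) 0 0 0 F).
    rewrite /dv -!mul_mpolyC.
    move: (shift4 (-1) (-1) 0 0 F) (shift4 (-1) 0 0 0 F) => A B.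
    move: (mderiv 0 F) (mderiv 1 F) (mderiv 2 F) (mderiv 3 F) => p0 p1 p2 p3.
    rewrite rmorph0 rmorphN1; ring.
  exact: msizeBle a3 b3.
- have [_ g2 g3] := Good_all 0 0 1 0 F.
  apply: (IHk (shift4 0 0 1 0 F - F)); first by move: g2; rewrite hF !subSS !subn0.
    exact: PB hPJ0 hP.
  apply: (Lnz (i := 2) (eps := 1) _ hF hi) => //; first by rewrite oner_eq0.
  have -> : shift4 0 0 1 0 F - F - 1 *: mderiv 2 F =
    shift4 0 0 1 0 F - F - dv 0 0 1 0 F by rewrite /dv !scale0r !addr0 add0r.
  by move: g3; rewrite hF !subSS !subn0.
- have [_ a2 a3] := Good_all 0 0 1 (-1) F.
  have [_ b2 b3] := Good_all 0 0 1 0 F.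
  rewrite hF !subSS !subn0 in a2 a3 b2 b3.
  apply: (IHk (shift4 0 0 1 (-1) F - shift4 0 0 1 0 F)).
  + have -> : shift4 0 0 1 (-1) F - shift4 0 0 1 0 F =
       (shift4 0 0 1 (-1) F - F) - (shift4 0 0 1 0 F - F).
      by move: (shift4 0 0 1 (-1) F) (shift4 0 0 1 0 F) => A B; ring.
    exact: msizeBle a2 b2.
  + exact: PB hPJ1 hPJ0.
  apply: (Lnz (i := 3) (eps := -1) _ hF hi) => //; first by rewrite oppr_eq0 oner_eq0.
  have -> : shift4 0 0 1 (-1) F - shift4 0 0 1 0 F - (-1) *: mderiv 3 F =
    (shift4 0 0 1 (-1) F - F - dv 0 0 1 (-1) F) - (shift4 0 0 1 0 F - F - dv 0 0 1 0 F).
    rewrite /dv -!mul_mpolyC.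
    move: (shift4 0 0 1 (-1) F) (shift4 0 0 1 0 F) => A B.
    move: (mderiv 0 F) (mderiv 1 F) (mderiv 2 F) (mderiv 3 F) => p0 p1 p2 p3.
    rewrite rmorph0 rmorphN1; ring.
  exact: msizeBle a3 b3.
Qed.
Lemma msizeXle (i : 'I_4) : (msize ('X_i : P4) <= 2)%N. Proof. by rewrite msizeXi. Qed.

Lemma bound3 (c : C) (X Y : P4) (d : nat) : (msize X <= 2)%N -> (msize Y <= d)%N ->
  (msize (cst c * X * Y) <= d.+1)%N.
Proof.
move=> hX hY; apply: leq_trans (msizeMle (msizeMle (msizecst c) hX) hY) _; lia.
Qed.

Section StepB.
Variable d : nat.
Hypothesis IH : forall F, (msize F <= d.+1)%N -> P F.

Lemma shdiff a b c e (G : P4) : (msize G <= d.+1)%N -> (msize (shift4 a b c e G - G) <= d)%N.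
Proof.
move=> hG; have [_ g2 _] := Good_all a b c e G.
apply: leq_trans g2 _; lia.
Qed.

Lemma XS G : (msize G <= d.+1)%N -> P ('X_0 * G) /\ P ('X_2 * G).
Proof.
move=> hG.
have Q : forall m : int, P (cst (l1 ^ m) * ('X_0 * G) + cst (l2 ^ m) * ('X_2 * G)).
  move=> m; have hH := PH m (IH hG).
  have a2 := shdiff 0 (- zm m) 0 0 hG. have b2 := shdiff 0 0 0 (- zm m) hG.
  move: (shift4 0 (- zm m) 0 0 G) (shift4 0 0 0 (- zm m) G) hH a2 b2 => A B hH a2 b2.
  have hE : P (cst (l1^m) * 'X_0 * (A - G) + cst (l2^m) * 'X_2 * (B - G)).
    by apply: IH; apply: msizeDle; apply: bound3 => //; exact: msizeXle.
  have := PB hH hE.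
  suff -> : (cst (l1 ^ m) * 'X_0 * A + cst (l2 ^ m) * 'X_2 * B) -
     (cst (l1 ^ m) * 'X_0 * (A - G) + cst (l2 ^ m) * 'X_2 * (B - G)) =
     cst (l1 ^ m) * ('X_0 * G) + cst (l2 ^ m) * ('X_2 * G) by [].
  ring.
by apply: solve2; apply: Q.
Qed.

Lemma YT G : (msize G <= d.+1)%N -> P ('X_1 * G) /\ P ('X_3 * G).
Proof.
move=> hG; have [hX0 hX2] := XS hG; have hG' := IH hG.
have Q : forall m : int, P (cst (l1 ^ m) * ('X_1 * G) + cst (l2 ^ m) * ('X_3 * G)).
  move=> m; have hL := PL m hG'.
  have a2 := shdiff 0 (- zm m) 0 0 hG. have b2 := shdiff 0 0 0 (- zm m) hG.
  move: (shift4 0 (- zm m) 0 0 G) (shift4 0 0 0 (- zm m) G) hL a2 b2 => A B hL a2 b2.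
  have hf1 : (msize (('X_1 - cst (zm m) * 'X_0 + cst (zm m * e1))%R : P4) <= 2)%N.
    apply: msizeDle; last by apply: leq_trans (msizecst _) _.
    apply: msizeBle; first exact: msizeXle.
    by apply: leq_trans (msizeMle (msizecst _) (msizeXle 0)) _.
  have hf2 : (msize (('X_3 + cst (zm m) * 'X_2 + cst (zm m * e2))%R : P4) <= 2)%N.
    apply: msizeDle; last by apply: leq_trans (msizecst _) _.
    apply: msizeDle; first exact: msizeXle.
    by apply: leq_trans (msizeMle (msizecst _) (msizeXle 2)) _.
  have hE : P (cst (l1 ^ m) * ('X_1 - cst (zm m) * 'X_0 + cst (zm m * e1)) * (A - G) +
      cst (l2 ^ m) * ('X_3 + cst (zm m) * 'X_2 + cst (zm m * e2)) * (B - G)).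
    by apply: IH; apply: msizeDle; apply: bound3.
  have h1 := PC (l1 ^ m) (PC (zm m) hX0).
  have h2 := PC (l1 ^ m) (PC (zm m * e1) hG').
  have h3 := PC (l2 ^ m) (PC (zm m) hX2).
  have h4 := PC (l2 ^ m) (PC (zm m * e2) hG').
  have := PB (PB (PD (PB hL hE) h1) h2) (PD h3 h4).
  suff -> : (cst (l1 ^ m) * ('X_1 - cst (zm m) * 'X_0 + cst (zm m * e1)) * A +
      cst (l2 ^ m) * ('X_3 + cst (zm m) * 'X_2 + cst (zm m * e2)) * B -
     (cst (l1 ^ m) * ('X_1 - cst (zm m) * 'X_0 + cst (zm m * e1)) * (A - G) +
      cst (l2 ^ m) * ('X_3 + cst (zm m) * 'X_2 + cst (zm m * e2)) * (B - G)) +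
     cst (l1 ^ m) * (cst (zm m) * ('X_0 * G)) - cst (l1 ^ m) * (cst (zm m * e1) * G) -
     (cst (l2 ^ m) * (cst (zm m) * ('X_2 * G)) + cst (l2 ^ m) * (cst (zm m * e2) * G))) =
     cst (l1 ^ m) * ('X_1 * G) + cst (l2 ^ m) * ('X_3 * G) by [].
  ring.
by apply: solve2; apply: Q.
Qed.

End StepB.
Lemma stepB d : (forall F, (msize F <= d.+1)%N -> P F) -> forall F, (msize F <= d.+2)%N -> P F.
Proof.
move=> IH F hF.
have mon : forall m : 'X_{1..4}, (mdeg m <= d.+1)%N -> P 'X_[m].
  move=> m hm.
  case: (posnP (mdeg m)) => [/eqP|hm0].
    by rewrite mdeg_eq0 => /eqP ->; rewrite mpolyX0; apply: IH; rewrite msize1.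
  have [i hi] := exists_pos hm0.
  have hK := submK (UleP hi).
  have hG : (msize ('X_[m - U_(i)] : P4) <= d.+1)%N.
    rewrite msizeX; move: hm; rewrite -{1}hK mdegD mdeg1; lia.
  rewrite -hK mpolyXD mulrC.
  case: (ord4 i) => Ei; rewrite Ei in hG *.
  - exact: (XS IH hG).1.
  - exact: (YT IH hG).1.
  - exact: (XS IH hG).2.
  - exact: (YT IH hG).2.
rewrite (mpolyE F).
have : forall m, m \in msupp F -> (mdeg m < d.+2)%N.
  by move=> m hm; apply: leq_trans (msize_mdeg_lt hm) hF.
elim: (msupp F) => [|m r IHr] H; first by rewrite big_nil; apply: P0.
rewrite big_cons; apply: PD.
  by apply: PZ; apply: mon; apply: H; rewrite inE eqxx.
by apply: IHr => m' hm'; apply: H; rewrite inE hm' orbT.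
Qed.

Lemma all_in : (exists F, P F /\ F != 0) -> forall F, P F.
Proof.
move=> [F0 [hP0 nz]].
have h1 := stepA (leqnn _) hP0 nz.
have H : forall d F, (msize F <= d.+1)%N -> P F.
  elim=> [|d IHd] F hF.
    by rewrite (msize1_polyC hF) -[_%:MP]mulr1 mul_mpolyC; apply: PZ.
  by apply: (stepB IHd).
by move=> F; apply: (H (msize F)); apply: leqnSn.
Qed.

End Irr.
End S.

Theorem theorem3p4 (R : realType) (l1 l2 s1 s2 e1 e2 : R[i]) :
  l1 != 0 -> l2 != 0 -> s1 != 0 -> s2 != 0 ->
  (tensor_irreducible l1 e1 s1 l2 e2 s2 <-> l1 != l2).
Proof.
move=> h1 h2 h3 h4; split.
- move=> H; apply/negP => /eqP E; move: H; rewrite -E; apply: reducible.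
- move=> h12; split; first by exists 1; rewrite oner_neq0.
  move=> P sub.
  case: (classic (exists F, P F /\ F != 0)) => [ex|nex].
  + by right; apply: (all_in h1 h2 h3 h4 h12 sub ex).
  + left => v hv; apply/eqP; apply/negP => nz; apply: nex; exists v; split => //; exact/negP.
Qed.
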